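(* Let $(Z,\nu)$ be a matrix gauge space with $\mathbb{C}$-proper matrix gauge and let $(\tilde Z,u)$ be its unitization. Then each $u_n$ is well-defined (the defining infimum is over a nonempty set, so $u_n$ takes finite values in $[0,\infty)$), and $\{u_n\}$ is a matrix-compatible function on $\tilde Z$: for all $(A,X)\in M_n(\tilde Z)$, $(B,Y)\in M_k(\tilde Z)$ and scalar $T\in M_{n,k}$, $u_{n+k}((A,X)\oplus(B,Y))=\max\{u_n(A,X),u_k(B,Y)\}$ and $u_k(T^*(A,X)T)\le\|T\|^2u_n(A,X)$.
   Context: A matrix gauge on a complex vector space $Z$ is a sequence $\{\nu_n:M_n(Z)\to[0,\infty)\}$ with $\nu_n(x+y)\le\nu_n(x)+\nu_n(y)$, $\nu_n(tx)=t\nu_n(x)$ ($t\ge0$), $\nu_k(X^*AX)\le\|X\|^2\nu_n(A)$ for scalar $X\in M_{n,k}$, and $\nu_{n+m}(A\oplus B)=\max\{\nu_n(A),\nu_m(B)\}$; it is $\mathbb{C}$-proper if $\nu_1(i^kz)=0$ for $k=0,1,2,3$ implies $z=0$. A matrix-compatible function is a sequence of functions satisfying the last two conditions. The unitization of $(Z,\nu)$ is $\tilde Z=Z\times\mathbb{C}$ with entrywise operations, $M_n(\tilde Z)$ identified with $M_n(Z)\times M_n$, and $u_n(A,X)=\inf\{t>0: X_t\gg0,\ \nu_n(X_t^{-1/2}AX_t^{-1/2})\le1\}$, where $X_t=tI_n-\operatorname{Re}(X)$, $\operatorname{Re}(X)=\frac12(X+X^* )$, and $X_t\gg0$ means $\sigma(X_t)\subset(0,\infty)$;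 $T^*(A,X)T=(T^*AT,T^*XT)$ and $(A,X)\oplus(B,Y)=(A\oplus B,X\oplus Y)$. *)

(* Defs.v *)
From Stdlib Require Import Reals Lra ClassicalEpsilon FunctionalExtensionality.
From HB Require Import structures.
From mathcomp Require Import all_boot all_order all_algebra.
Set Implicit Arguments. Unset Strict Implicit. Unset Printing Implicit Defensive.
Import GRing.Theory.
Local Open Scope R_scope.

Record cpx := Cpx { cre : R; cim : R }.

Definition cpx_eqb (x y : cpx) : bool :=
  if Req_EM_T (cre x) (cre y) then
    if Req_EM_T (cim x) (cim y) then true else false
  else false.

Lemma cpx_eqP : Equality.axiom cpx_eqb.
Proof.
move=> [a b] [c d]; rewrite /cpx_eqb /=.
case: (Req_EM_T a c) => [h|h]; last by constructor => -[].
case: (Req_EM_T b d) => [h'|h']; first by constructor; rewrite h h'.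
by constructor => -[].
Qed.
HB.instance Definition _ := hasDecEq.Build cpx cpx_eqP.

Definition cpx_find (P : pred cpx) (n : nat) : option cpx :=
  match excluded_middle_informative (exists x, P x) with
  | left H => Some (proj1_sig (constructive_indefinite_description _ H))
  | right _ => None
  end.

Lemma cpx_find_correct P n x : cpx_find P n = Some x -> P x.
Proof.
rewrite /cpx_find; case: excluded_middle_informative => // H [<-].
exact: proj2_sig (constructive_indefinite_description _ H).
Qed.
Lemma cpx_find_complete (P : pred cpx) : (exists x, P x) -> exists n, cpx_find P n.
Proof.
move=> H; exists 0%N; rewrite /cpx_find; by case: excluded_middle_informative.
Qed.
Lemma cpx_find_ext (P Q : pred cpx) : P =1 Q -> cpx_find P =1 cpx_find Q.
Proof. by move=> h; have -> : P = Q by apply: functional_extensionality. Qed.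
HB.instance Definition _ := hasChoice.Build cpx cpx_find_correct cpx_find_complete cpx_find_ext.

Definition cpx0 := Cpx 0 0.
Definition cpx1 := Cpx 1 0.
Definition cpx_add x y := Cpx (cre x + cre y) (cim x + cim y).
Definition cpx_opp x := Cpx (- cre x) (- cim x).
Definition cpx_mul x y := Cpx (cre x * cre y - cim x * cim y) (cre x * cim y + cim x * cre y).
Definition cpx_inv x := Cpx (cre x / (cre x * cre x + cim x * cim x))
                            (- cim x / (cre x * cre x + cim x * cim x)).

Lemma cpx_addA : associative cpx_add.
Proof. move=> [a b] [c d] [e f]; rewrite /cpx_add /=; f_equal; ring. Qed.
Lemma cpx_addC : commutative cpx_add.
Proof. move=> [a b] [c d]; rewrite /cpx_add /=; f_equal; ring. Qed.
Lemma cpx_add0 : left_id cpx0 cpx_add.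
Proof. move=> [a b]; rewrite /cpx_add /=; f_equal; ring. Qed.
Lemma cpx_addN : left_inverse cpx0 cpx_opp cpx_add.
Proof. move=> [a b]; rewrite /cpx_add /cpx0 /=; f_equal; ring. Qed.
HB.instance Definition _ := GRing.isZmodule.Build cpx cpx_addA cpx_addC cpx_add0 cpx_addN.

Lemma cpx_mulA : associative cpx_mul.
Proof. move=> [a b] [c d] [e f]; rewrite /cpx_mul /=; f_equal; ring. Qed.
Lemma cpx_mulC : commutative cpx_mul.
Proof. move=> [a b] [c d]; rewrite /cpx_mul /=; f_equal; ring. Qed.
Lemma cpx_mul1 : left_id cpx1 cpx_mul.
Proof. move=> [a b]; rewrite /cpx_mul /=; f_equal; ring. Qed.
Lemma cpx_mulDl : left_distributive cpx_mul cpx_add.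
Proof. move=> [a b] [c d] [e f]; rewrite /cpx_mul /cpx_add /=; f_equal; ring. Qed.
Lemma cpx_one_neq0 : cpx1 != cpx0.
Proof. apply/eqP => -[h]; lra. Qed.
HB.instance Definition _ := GRing.Zmodule_isComNzRing.Build cpx
  cpx_mulA cpx_mulC cpx_mul1 cpx_mulDl cpx_one_neq0.

Lemma cpx_mulVf x : x != 0%R -> cpx_mul (cpx_inv x) x = 1%R.
Proof.
case: x => a b /eqP hx.
have hn : (a * a + b * b <> 0).
  move=> h; apply: hx.
  have ha : a = 0 by nra.
  have hb : b = 0 by nra.
  by rewrite ha hb.
rewrite /cpx_mul /cpx_inv /=; change (1%R : cpx) with cpx1; rewrite /cpx1; f_equal; field; lra.
Qed.
Lemma cpx_inv0 : cpx_inv 0%R = 0%R.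
Proof.
change (0%R : cpx) with cpx0; rewrite /cpx_inv /cpx0 /=; f_equal;
 rewrite ?Rmult_0_l ?Rplus_0_l ?Ropp_0; rewrite /Rdiv Rmult_0_l //.
Qed.
HB.instance Definition _ := GRing.ComNzRing_isField.Build cpx cpx_mulVf cpx_inv0.


Definition cconj (z : cpx) : cpx := Cpx (cre z) (- cim z).
Definition rC (r : R) : cpx := Cpx r 0.
Definition ci : cpx := Cpx 0 1.
Definition cabs (z : cpx) : R := sqrt (cre z ^ 2 + cim z ^ 2).

Definition is_inf (E : R -> Prop) (m : R) : Prop :=
  (forall x, E x -> m <= x) /\ (forall b, (forall x, E x -> b <= x) -> b <= m).
Definition Inf (E : R -> Prop) : R := epsilon (inhabits 0) (is_inf E).

Definition adj m n (T : 'M[cpx]_(m, n)) : 'M[cpx]_(n, m) := (map_mx cconj T)^T.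
Definition hermitian n (M : 'M[cpx]_n) : Prop := adj M = M.
Definition mx_pos n (M : 'M[cpx]_n) : Prop :=
  forall a : cpx, eigenvalue M a -> cim a = 0 /\ 0 < cre a.
Definition ReM n (X : 'M[cpx]_n) : 'M[cpx]_n := (rC (/ 2) *: (X + adj X))%R.
Definition Xt n (t : R) (X : 'M[cpx]_n) : 'M[cpx]_n := ((rC t)%:M - ReM X)%R.
(* M^{-1/2} : the (unique) positive Hermitian square root of M^{-1}
   (meaningful when M is Hermitian with M >> 0) *)
Definition invsqrt n (M : 'M[cpx]_n) : 'M[cpx]_n :=
  epsilon (inhabits 0%R)
    (fun S => hermitian S /\ mx_pos S /\ (S *m S)%R = invmx M).

Definition vnorm k (v : 'cV[cpx]_k) : R :=
  sqrt (\big[Rplus/0]_(i < k) (cabs (v i ord0) ^ 2)).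
Definition opnorm m n (T : 'M[cpx]_(m, n)) : R :=
  Inf (fun c => 0 <= c /\ forall v : 'cV[cpx]_n, vnorm (T *m v)%R <= c * vnorm v).

Section ZMat.
Variable Z : lmodType cpx.
Definition lmulZ m n p (S : 'M[cpx]_(m, n)) (A : 'M[Z]_(n, p)) : 'M[Z]_(m, p) :=
  (\matrix_(i, j) \sum_(l < n) (S i l *: A l j))%R.
Definition rmulZ m n p (A : 'M[Z]_(m, n)) (S : 'M[cpx]_(n, p)) : 'M[Z]_(m, p) :=
  (\matrix_(i, j) \sum_(l < n) (S l j *: A i l))%R.
Definition congZ n k (X : 'M[cpx]_(n, k)) (A : 'M[Z]_n) : 'M[Z]_k :=
  lmulZ (adj X) (rmulZ A X).
Definition dsumZ n m (A : 'M[Z]_n) (B : 'M[Z]_m) : 'M[Z]_(n + m) :=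
  block_mx A 0%R 0%R B.
Definition smulZ n (t : R) (A : 'M[Z]_n) : 'M[Z]_n := map_mx (fun z => rC t *: z)%R A.

Definition matrix_compatible (nu : forall n, 'M[Z]_n -> R) : Prop :=
  (forall n k (X : 'M[cpx]_(n, k)) (A : 'M[Z]_n),
      nu k (congZ X A) <= opnorm X ^ 2 * nu n A) /\
  (forall n m (A : 'M[Z]_n) (B : 'M[Z]_m),
      nu (n + m)%N (dsumZ A B) = Rmax (nu n A) (nu m B)).

Definition matrix_gauge (nu : forall n, 'M[Z]_n -> R) : Prop :=
  (forall n (A : 'M[Z]_n), 0 <= nu n A) /\
  (forall n (A B : 'M[Z]_n), nu n (A + B)%R <= nu n A + nu n B) /\
  (forall n (t : R) (A : 'M[Z]_n), 0 <= t -> nu n (smulZ t A) = t * nu n A) /\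
  matrix_compatible nu.

Definition C_proper (nu : forall n, 'M[Z]_n -> R) : Prop :=
  forall z : Z, (forall k : nat, (k < 4)%N -> nu 1%N (const_mx (ci ^+ k *: z)%R) = 0) -> z = 0%R.

(* Unitization: M_n(Z~) = M_n(Z) x M_n *)
Definition ufeas (nu : forall n, 'M[Z]_n -> R) n (A : 'M[Z]_n) (X : 'M[cpx]_n) (t : R) : Prop :=
  0 < t /\ mx_pos (Xt t X) /\
  nu n (lmulZ (invsqrt (Xt t X)) (rmulZ A (invsqrt (Xt t X)))) <= 1.
Definition unorm (nu : forall n, 'M[Z]_n -> R) n (A : 'M[Z]_n) (X : 'M[cpx]_n) : R :=
  Inf (ufeas nu A X).
End ZMat.

(* Main.v *)
Require Import Defs.
From Stdlib Require Import Reals Lra ClassicalEpsilon.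
From mathcomp Require Import all_boot all_order all_algebra.
From HB Require Import structures.
From mathcomp Require Import all_boot all_order all_algebra closed_field sesquilinear spectral.
From mathcomp Require Import Rstruct.
From mathcomp.real_closed Require Import complex.
From mathcomp Require Import ring.
Set Implicit Arguments. Unset Strict Implicit. Unset Printing Implicit Defensive.
Import Order.TTheory GRing.Theory Num.Theory Num.Def.

Definition phi (x : cpx) : R[i] := Complex (cre x) (cim x).
Definition psi (z : R[i]) : cpx := Cpx (complex.Re z) (complex.Im z).
Lemma phiK : cancel phi psi. Proof. by case. Qed.
Lemma psiK : cancel psi phi. Proof. by case. Qed.
Lemma phi_inj : injective phi. Proof. exact: can_inj phiK. Qed.
Lemma phi_add : {morph phi : x y / (x + y)%R}. Proof. by case=> a b [c d]. Qed.
Lemma phi_mul : {morph phi : x y / (x * y)%R}. Proof. by case=> a b [c d]. Qed.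
Lemma phi_1 : phi 1%R = 1%R. Proof. by []. Qed.
Lemma phi_0 : phi 0%R = 0%R. Proof. by []. Qed.
Lemma phi_opp : {morph phi : x / (- x)%R}. Proof. by case. Qed.
Lemma phi_sub : {morph phi : x y / (x - y)%R}. Proof. by move=> x y; rewrite phi_add phi_opp. Qed.

HB.instance Definition _ := GRing.isZmodMorphism.Build cpx R[i] phi phi_sub.
HB.instance Definition _ := GRing.isMonoidMorphism.Build cpx R[i] phi (conj phi_1 phi_mul).

Local Open Scope ring_scope.
Definition cle (x y : cpx) : bool := (phi x <= phi y).
Definition clt (x y : cpx) : bool := (phi x < phi y).
Definition cnorm (x : cpx) : cpx := psi `|phi x|.
Lemma cnormE x : phi (cnorm x) = `|phi x|. Proof. by rewrite /cnorm psiK. Qed.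

Lemma c_normD x y : cle (cnorm (x + y)) (cnorm x + cnorm y).
Proof. by rewrite /cle rmorphD !cnormE rmorphD ler_normD. Qed.
Lemma c_addr_gt0 x y : clt 0 x -> clt 0 y -> clt 0 (x + y).
Proof. by rewrite /clt rmorphD rmorph0; apply: addr_gt0. Qed.
Lemma c_norm_eq0 x : cnorm x = 0 -> x = 0.
Proof. move=> h; apply: phi_inj; rewrite rmorph0; apply/normr0_eq0; by rewrite -cnormE h rmorph0. Qed.
Lemma c_ger_total x y : cle 0 x -> cle 0 y -> cle x y || cle y x.
Proof. rewrite /cle rmorph0 => hx hy; exact: ger_leVge. Qed.
Lemma c_normM : {morph cnorm : x y / x * y}.
Proof. by move=> x y; apply: phi_inj; rewrite rmorphM !cnormE rmorphM normrM. Qed.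
Lemma c_le_def x y : cle x y = (cnorm (y - x) == y - x).
Proof.
rewrite /cle -subr_ge0 ger0_def -rmorphB -cnormE.
by apply/eqP/eqP => [h|->//]; apply: phi_inj.
Qed.
Lemma c_lt_def x y : clt x y = (y != x) && cle x y.
Proof. by rewrite /clt lt_def (inj_eq phi_inj). Qed.

HB.instance Definition _ := Num.IntegralDomain_isNumRing.Build cpx
  c_normD c_addr_gt0 c_norm_eq0 c_ger_total c_normM c_le_def c_lt_def.

Lemma c_acf : GRing.closed_field_axiom cpx.
Proof.
move=> n P n0.
have [z hz] := @solve_monicpoly R[i] n (fun i => phi (P i)) n0.
exists (psi z); apply: phi_inj; rewrite rmorphXn /= psiK hz rmorph_sum.
by apply: eq_bigr => i _; rewrite rmorphM rmorphXn /= psiK.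
Qed.
HB.instance Definition _ := Field_isAlgClosed.Build cpx c_acf.

Lemma phi_conj x : phi (cconj x) = conjc (phi x). Proof. by case: x. Qed.
Lemma cconjE x : cconj x = psi (conjc (phi x)). Proof. by rewrite -phi_conj phiK. Qed.
Lemma cconj_sub : {morph cconj : x y / x - y}.
Proof. by move=> x y; apply: phi_inj; rewrite phi_conj !phi_sub !phi_conj rmorphB. Qed.
Lemma cconj_mul : {morph cconj : x y / x * y}.
Proof. by move=> x y; apply: phi_inj; rewrite phi_conj !phi_mul !phi_conj rmorphM. Qed.
Lemma cconj_1 : cconj 1 = 1. Proof. by apply: phi_inj; rewrite phi_conj phi_1 rmorph1. Qed.
HB.instance Definition _ := GRing.isZmodMorphism.Build cpx cpx cconj cconj_sub.
HB.instance Definition _ := GRing.isMonoidMorphism.Build cpx cpx cconj (conj cconj_1 cconj_mul).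
Lemma c_sqrCi : ci ^+ 2 = - 1.
Proof. apply: phi_inj; rewrite rmorphXn rmorphN1 /=; exact: sqr_i. Qed.
Lemma c_normCK x : `|x| ^+ 2 = x * cconj x.
Proof.
apply: phi_inj; rewrite rmorphXn rmorphM /= phi_conj.
have -> : phi `|x| = `|phi x| by exact: cnormE.
exact: sqr_normc.
Qed.
HB.instance Definition _ := Num.NumField_isImaginary.Build cpx c_sqrCi c_normCK.

Lemma conjCE (x : cpx) : x^* = cconj x. Proof. by []. Qed.
Lemma normE (x : cpx) : phi `|x| = `|phi x|. Proof. exact: cnormE. Qed.
Lemma leE (x y : cpx) : (x <= y) = (phi x <= phi y). Proof. by []. Qed.

Lemma cconjK : involutive cconj. Proof. by case=> a b; rewrite /cconj /= Ropp_involutive. Qed.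
Lemma adjE m n (A : 'M[cpx]_(m, n)) i j : adj A i j = cconj (A j i).
Proof. by rewrite !mxE. Qed.
Lemma adjM m n p (A : 'M[cpx]_(m, n)) (B : 'M[cpx]_(n, p)) : adj (A *m B) = adj B *m adj A.
Proof. by rewrite /adj map_mxM trmx_mul. Qed.
Lemma adjK m n (A : 'M[cpx]_(m, n)) : adj (adj A) = A.
Proof. by apply/matrixP=> i j; rewrite !mxE cconjK. Qed.
Lemma adjD m n (A B : 'M[cpx]_(m, n)) : adj (A + B) = adj A + adj B.
Proof. by rewrite /adj map_mxD linearD. Qed.
Lemma adjN m n (A : 'M[cpx]_(m, n)) : adj (- A) = - adj A.
Proof. by rewrite /adj map_mxN linearN. Qed.
Lemma adjB m n (A B : 'M[cpx]_(m, n)) : adj (A - B) = adj A - adj B.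
Proof. by rewrite adjD adjN. Qed.
Lemma adjZ m n c (A : 'M[cpx]_(m, n)) : adj (c *: A) = cconj c *: adj A.
Proof. by apply/matrixP=> i j; rewrite !mxE rmorphM. Qed.
Lemma adj_scalar n c : adj (c%:M : 'M[cpx]_n) = (cconj c)%:M.
Proof. by apply/matrixP=> i j; rewrite !mxE rmorphMn eq_sym. Qed.
Lemma adj1 n : adj (1%:M : 'M[cpx]_n) = 1%:M.
Proof. by rewrite adj_scalar rmorph1. Qed.
Lemma adj0 m n : adj (0 : 'M[cpx]_(m, n)) = 0.
Proof. by apply/matrixP=> i j; rewrite !mxE rmorph0. Qed.
Lemma adj_block m1 m2 n1 n2 (A : 'M[cpx]_(m1, n1)) (B : 'M[cpx]_(m1, n2))
  (C : 'M[cpx]_(m2, n1)) (D : 'M[cpx]_(m2, n2)) :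
  adj (block_mx A B C D) = block_mx (adj A) (adj C) (adj B) (adj D).
Proof. by rewrite /adj map_block_mx tr_block_mx. Qed.
Lemma adj_invmx n (A : 'M[cpx]_n) : adj (invmx A) = invmx (adj A).
Proof. by rewrite /adj map_invmx trmx_inv. Qed.
Lemma adj_col m1 m2 n (A : 'M[cpx]_(m1, n)) (B : 'M[cpx]_(m2, n)) :
  adj (col_mx A B) = row_mx (adj A) (adj B).
Proof. by rewrite /adj map_col_mx tr_col_mx. Qed.
Lemma adj_tC m n (A : 'M[cpx]_(m, n)) : adj A = ((A ^T) ^ conjC)%sesqui.
Proof. by rewrite /adj map_trmx. Qed.

Lemma phi_rC r : phi (rC r) = (r%:C)%C. Proof. by []. Qed.
Lemma rC_le r s : (rC r <= rC s) = (r <= s). Proof. by rewrite leE !phi_rC lecR. Qed.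
Lemma rC_lt r s : (rC r < rC s) = (r < s). Proof. by rewrite /Order.lt /= /clt !phi_rC ltcR. Qed.
Lemma rC_add r s : rC (r + s) = rC r + rC s.
Proof. by apply: phi_inj; rewrite phi_add !phi_rC rmorphD. Qed.
Lemma rC_mul r s : rC (r * s) = rC r * rC s.
Proof. by apply: phi_inj; rewrite phi_mul !phi_rC rmorphM. Qed.
Lemma rC_opp r : rC (- r) = - rC r.
Proof. by apply: phi_inj; rewrite phi_opp !phi_rC rmorphN. Qed.
Lemma rC0 : rC 0 = 0. Proof. by []. Qed.
Lemma rC_Rplus r s : rC (Rplus r s) = rC r + rC s. Proof. exact: rC_add. Qed.
Lemma rC_Rmult r s : rC (Rmult r s) = rC r * rC s. Proof. exact: rC_mul. Qed.
Lemma rC1 : rC 1 = 1. Proof. by []. Qed.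
Lemma rC_conj r : cconj (rC r) = rC r.
Proof. by apply: phi_inj; rewrite phi_conj phi_rC conjc_real. Qed.
Lemma rC_inj : injective rC. Proof. by move=> r s []. Qed.
Lemma normC_rC z : `|z| = rC (cabs z).
Proof.
apply: phi_inj; rewrite normE phi_rC /cabs RsqrtE.
case: z => a b /=.
by rewrite [LHS]/Num.norm /= !Rmult_1_r !expr2.
Qed.

Definition QF k (M : 'M[cpx]_k) (w : 'cV[cpx]_k) : cpx := (adj w *m M *m w) ord0 ord0.
Definition QV k (w : 'cV[cpx]_k) : cpx := (adj w *m w) ord0 ord0.

Lemma QF1 k (w : 'cV[cpx]_k) : QF 1%:M w = QV w.
Proof. by rewrite /QF mulmx1. Qed.
Lemma QFD k (M N : 'M[cpx]_k) w : QF (M + N) w = QF M w + QF N w.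
Proof. by rewrite /QF mulmxDr mulmxDl mxE. Qed.
Lemma QFN k (M : 'M[cpx]_k) w : QF (- M) w = - QF M w.
Proof. by rewrite /QF mulmxN mulNmx mxE. Qed.
Lemma QFB k (M N : 'M[cpx]_k) w : QF (M - N) w = QF M w - QF N w.
Proof. by rewrite QFD QFN. Qed.
Lemma QF_scalar k c (w : 'cV[cpx]_k) : QF c%:M w = c * QV w.
Proof. by rewrite /QF mul_mx_scalar -scalemxAl mxE. Qed.
Lemma QFZ k c (M : 'M[cpx]_k) w : QF (c *: M) w = c * QF M w.
Proof. by rewrite /QF -scalemxAr -scalemxAl mxE. Qed.
Lemma QF_cong n k (T : 'M[cpx]_(n, k)) (M : 'M[cpx]_n) w :
  QF (adj T *m M *m T) w = QF M (T *m w).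
Proof. by rewrite /QF adjM !mulmxA. Qed.
Lemma QV_QF n k (T : 'M[cpx]_(n, k)) w : QV (T *m w) = QF (adj T *m T) w.
Proof. by rewrite -QF1 -QF_cong mulmx1. Qed.

Lemma QV_sum k (w : 'cV[cpx]_k) : QV w = \sum_i `|w i ord0| ^+ 2.
Proof.
rewrite /QV mxE; apply: eq_bigr => i _.
by rewrite !mxE normCK mulrC conjCE.
Qed.
Lemma QV_ge0 k (w : 'cV[cpx]_k) : 0 <= QV w.
Proof. by rewrite QV_sum; apply: sumr_ge0 => i _; rewrite exprn_ge0. Qed.
Lemma QV_eq0 k (w : 'cV[cpx]_k) : QV w = 0 -> w = 0.
Proof.
rewrite QV_sum => /eqP; rewrite psumr_eq0 => [/allP h|i _]; last by rewrite exprn_ge0.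
apply/matrixP => i j; rewrite ord1 mxE; have := h i (mem_index_enum _).
by rewrite expf_eq0 /= normr_eq0 => /eqP.
Qed.
Lemma QV_gt0 k (w : 'cV[cpx]_k) : w != 0 -> 0 < QV w.
Proof. by move=> hw; rewrite lt_def QV_ge0 andbT; apply/eqP => /QV_eq0 /eqP; apply/negP. Qed.

Lemma conj11 (X : 'M[cpx]_1) : cconj (X ord0 ord0) = adj X ord0 ord0.
Proof. by rewrite !mxE. Qed.
Lemma QF_herm k (M : 'M[cpx]_k) w : Defs.hermitian M -> QF M w \is Num.real.
Proof.
move=> hM; rewrite CrealE conjCE /QF conj11 !adjM adjK.
by rewrite hM mulmxA.
Qed.

Lemma posE (a : cpx) : 0 < a <-> (cim a = 0 /\ Rlt 0 (cre a)).
Proof.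
rewrite /Order.lt /= /clt phi_0 ltcE /=; split.
  by case/andP => /eqP -> /RltP.
by case=> -> /RltP ->; rewrite eqxx.
Qed.
Lemma mx_posE n (M : 'M[cpx]_n) : mx_pos M <-> (forall a, eigenvalue M a -> 0 < a).
Proof. by split=> h a /h /posE. Qed.

Lemma QF_diag k (d : 'rV[cpx]_k) u : QF (diag_mx d) u = \sum_i d 0 i * `|u i ord0| ^+ 2.
Proof.
rewrite /QF mul_mx_diag mxE; apply: eq_bigr => i _.
by rewrite !mxE normCK conjCE; ring.
Qed.

Definition spec_form k (H : 'M[cpx]_k) (P : 'M[cpx]_k) (d : 'rV[cpx]_k) :=
  adj P *m P = 1%:M /\ P *m adj P = 1%:M /\ H = adj P *m diag_mx d *m P.

Lemma spec_herm k (H : 'M[cpx]_k) : Defs.hermitian H ->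
  exists P d, spec_form H P d /\ forall i, d 0 i \is Num.real.
Proof.
move=> hH.
have hs : H \is hermsymmx.
  by apply/is_hermitianmxP; rewrite expr0 scale1r -adj_tC hH.
have /orthomx_spectralP E := hermitian_normalmx hs.
have U := spectral_unitarymx H; have Uu := spectral_unit H.
exists (spectralmx H), (spectral_diag H); split; last first.
  by move=> i; have /mxOverP := hermitian_spectral_diag_real hs; apply.
have ea : adj (spectralmx H) = invmx (spectralmx H) by rewrite invmx_unitary // adj_tC.
split; first by rewrite ea mulVmx.
by rewrite ea mulmxV //; split=> //; rewrite {1}E ea.
Qed.

Lemma spec_QV k (H P : 'M[cpx]_k) d w : spec_form H P d -> QV (P *m w) = QV w.
Proof. by case=> h1 _; rewrite QV_QF h1 QF1. Qed.
Lemma spec_QF k (H P : 'M[cpx]_k) d w : spec_form H P d ->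
  QF H w = \sum_i d 0 i * `|(P *m w) i ord0| ^+ 2.
Proof. by case=> _ [_ ->]; rewrite QF_cong QF_diag. Qed.

Lemma spec_lower k (H P : 'M[cpx]_k) d lo : spec_form H P d ->
  (forall i, lo <= d 0 i) -> forall w, lo * QV w <= QF H w.
Proof.
move=> hs hlo w; rewrite (spec_QF _ hs) -(spec_QV _ hs) QV_sum mulr_sumr.
by apply: ler_sum => i _; rewrite ler_wpM2r ?exprn_ge0.
Qed.
Lemma spec_upper k (H P : 'M[cpx]_k) d hi : spec_form H P d ->
  (forall i, d 0 i <= hi) -> forall w, QF H w <= hi * QV w.
Proof.
move=> hs hhi w; rewrite (spec_QF _ hs) -(spec_QV _ hs) QV_sum mulr_sumr.
by apply: ler_sum => i _; rewrite ler_wpM2r ?exprn_ge0.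
Qed.

Lemma spec_eig k (H P : 'M[cpx]_k) d i : spec_form H P d -> eigenvalue H (d 0 i).
Proof.
case=> h1 [h2 hH]; apply/eigenvalueP; exists (row i P).
  by rewrite -row_mul hH !mulmxA h2 mul1mx row_mul row_diag_mx -scalemxAl -rowE.
apply/negP => /eqP h0.
have : row i (P *m adj P) = 0 by rewrite row_mul h0 mul0mx.
rewrite h2 => /rowP /(_ i); rewrite !mxE eqxx /= => /eqP; by rewrite oner_eq0.
Qed.

Lemma pos_min k (d : 'rV[cpx]_k) : (forall i, 0 < d 0 i) ->
  exists c, 0 < c /\ forall i, c <= d 0 i.
Proof.
move=> hd; set S := \sum_i (d 0 i)^-1.
have S0 : 0 <= S by apply: sumr_ge0 => i _; rewrite invr_ge0 ltW.
have S1 : 0 < 1 + S by rewrite ltr_wpDr.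
exists (1 + S)^-1; split; first by rewrite invr_gt0.
move=> i; rewrite -[d 0 i]invrK lef_pV2 ?posrE ?invr_gt0 //.
rewrite /S (bigD1 i) //= addrCA ler_wpDr //.
by rewrite addr_ge0 // sumr_ge0 // => j _; rewrite invr_ge0 ltW.
Qed.

Lemma lower_pos k (M : 'M[cpx]_k) c : Defs.hermitian M -> 0 < c ->
  (forall w, c * QV w <= QF M w) -> mx_pos M.
Proof.
move=> hM c0 hw; apply/mx_posE => a /eigenvalueP [v hv v0].
have := hw (adj v).
have -> : QF M (adj v) = a * QV (adj v).
  by rewrite /QF /QV !adjK hv -scalemxAl mxE.
have q0 : 0 < QV (adj v).
  by apply: QV_gt0; apply: contra v0 => /eqP h; rewrite -[v]adjK h adj0.
by rewrite ler_pM2r // => /(lt_le_trans c0).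
Qed.

Lemma pos_lower k (M : 'M[cpx]_k) : Defs.hermitian M -> mx_pos M ->
  exists c, 0 < c /\ forall w, c * QV w <= QF M w.
Proof.
move=> hM /mx_posE hp; have [P [d [hs _]]] := spec_herm hM.
have [c [c0 hc]] : exists c, 0 < c /\ forall i, c <= d 0 i.
  by apply: pos_min => i; apply: hp; exact: spec_eig hs.
by exists c; split => //; apply: spec_lower hs hc.
Qed.

Lemma herm_upper k (M : 'M[cpx]_k) : Defs.hermitian M ->
  exists K, 0 <= K /\ forall w, QF M w <= K * QV w.
Proof.
move=> hM; have [P [d [hs hr]]] := spec_herm hM.
exists (\sum_i `|d 0 i|); split; first by apply: sumr_ge0 => i _.
apply: (spec_upper hs) => i; apply: le_trans (real_ler_norm (hr i)) _.
by rewrite (bigD1 i) //= ler_wpDr // sumr_ge0.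
Qed.

Lemma adj_diag_real k (d : 'rV[cpx]_k) : (forall i, d 0 i \is Num.real) ->
  adj (diag_mx d) = diag_mx d.
Proof.
move=> hr; apply/matrixP => i j; rewrite !mxE rmorphMn eq_sym.
case: (eqVneq i j) => [->|_]; last by rewrite !mulr0n.
by have := conj_Creal (hr j); rewrite conjCE /= => ->.
Qed.

Lemma sqrt_exists k (H : 'M[cpx]_k) : Defs.hermitian H -> mx_pos H ->
  exists S, Defs.hermitian S /\ mx_pos S /\ S *m S = invmx H.
Proof.
move=> hH /mx_posE hp; have [P [d [hs _]]] := spec_herm hH.
have d0 : forall i, 0 < d 0 i by move=> i; apply: hp; exact: spec_eig hs.
pose s : 'rV[cpx]_k := \row_i (sqrtC (d 0 i))^-1.
have s0 : forall i, 0 < s 0 i by move=> i; rewrite mxE invr_gt0 sqrtC_gt0.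
have sr : forall i, s 0 i \is Num.real by move=> i; rewrite gtr0_real.
case: (hs) => h1 [h2 hHe].
pose S := adj P *m diag_mx s *m P.
have hsS : spec_form S P s by [].
have hS : Defs.hermitian S.
  by rewrite /Defs.hermitian /S !adjM adjK adj_diag_real // mulmxA.
have SS : S *m S = adj P *m diag_mx (\row_j (s 0 j * s 0 j)) *m P.
  rewrite /S -!mulmxA; congr (_ *m _); rewrite !mulmxA.
  by rewrite -[diag_mx s *m P *m adj P]mulmxA h2 mulmx1 mulmx_diag.
have HSS : H *m (S *m S) = 1%:M.
  rewrite SS hHe -!mulmxA; rewrite [P *m (adj P *m _)]mulmxA h2 mul1mx.
  rewrite [diag_mx d *m _]mulmxA mulmx_diag.
  have -> : diag_mx (\row_j (d 0 j * (\row_j0 (s 0 j0 * s 0 j0)) 0 j)) = 1%:M :> 'M[cpx]_k.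
    rewrite -diag_const_mx; congr diag_mx; apply/rowP => j; rewrite !mxE.
    rewrite -invfM -expr2 sqrtCK mulfV //; exact: lt0r_neq0 (d0 j).
  by rewrite mul1mx h1.
exists S; split => //; split; last first.
  have [uH uSS] := mulmx1_unit HSS.
  by rewrite -[S *m S](mulKmx uH) HSS mulmx1.
have [c [c0 hc]] := pos_min s0.
exact: lower_pos hS c0 (spec_lower hsS hc).
Qed.

Lemma invsqrt_spec k (H : 'M[cpx]_k) : Defs.hermitian H -> mx_pos H ->
  Defs.hermitian (invsqrt H) /\ mx_pos (invsqrt H) /\ invsqrt H *m invsqrt H = invmx H.
Proof.
move=> hH hp; rewrite /invsqrt; apply: (epsilon_spec (inhabits 0%R) (fun S => Defs.hermitian S /\ mx_pos S /\ (S *m S)%R = invmx H)).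
have [S hS] := sqrt_exists hH hp; by exists S.
Qed.

Section RealPart.
Local Open Scope R_scope.

Lemma Inf_spec (E : R -> Prop) : (exists x, E x) -> (forall x, E x -> 0 <= x) ->
  is_inf E (Inf E).
Proof.
move=> [x0 Ex0] hlb; rewrite /Inf; apply: epsilon_spec.
have bE : bound (fun y => E (- y)).
  by exists 0 => y /hlb; lra.
have nE : exists y, E (- y) by exists (- x0); rewrite Ropp_involutive.
have [m [hub hl]] := completeness _ bE nE.
exists (- m); split.
- move=> x Ex; have : E (- - x) by rewrite Ropp_involutive.
  by move/hub; lra.
- move=> b hb; suff : m <= - b by lra.
  apply: hl => y Ey; have := hb _ Ey; lra.
Qed.

Lemma inf_le (E : R -> Prop) m x : is_inf E m -> E x -> m <= x.
Proof. by case=> h _ /h. Qed.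
Lemma le_inf (E : R -> Prop) m b : is_inf E m -> (forall x, E x -> b <= x) -> b <= m.
Proof. by case=> _ h /h. Qed.
Lemma inf_approx (E : R -> Prop) m eps : is_inf E m -> 0 < eps -> exists x, E x /\ x < m + eps.
Proof.
move=> hm he; apply: NNPP => hn.
have : m + eps <= m.
  apply: (le_inf hm) => x Ex; apply: Rnot_lt_le => hx; apply: hn; by exists x.
lra.
Qed.

Lemma pow2_mul x : x ^ 2 = x * x. Proof. by rewrite /= Rmult_1_r. Qed.

Lemma vnorm_ge0 k (v : 'cV[cpx]_k) : 0 <= vnorm v.
Proof. exact: sqrt_pos. Qed.

Lemma vnorm_QV k (v : 'cV[cpx]_k) : QV v = rC (vnorm v ^ 2).
Proof.
have hS : rC (\big[Rplus/0]_(i < k) (cabs (v i ord0) ^ 2)) = QV v.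
  rewrite (big_morph rC rC_add rC0) QV_sum; apply: eq_bigr => i _.
  by rewrite pow2_mul rC_mul -normC_rC expr2.
have S0 : 0 <= \big[Rplus/0]_(i < k) (cabs (v i ord0) ^ 2).
  by apply/RleP; rewrite -rC_le rC0 hS QV_ge0.
by rewrite /vnorm pow2_sqrt // hS.
Qed.

Lemma QV_le_vnorm m k (u : 'cV[cpx]_m) (w : 'cV[cpx]_k) c :
  (QV u <= rC c * QV w)%R -> vnorm u ^ 2 <= c * vnorm w ^ 2.
Proof. by rewrite !vnorm_QV -rC_mul rC_le => /RleP. Qed.

Lemma vnorm_le_QV m k (u : 'cV[cpx]_m) (w : 'cV[cpx]_k) c :
  vnorm u ^ 2 <= c * vnorm w ^ 2 -> (QV u <= rC c * QV w)%R.
Proof. by rewrite !vnorm_QV -rC_mul rC_le => /RleP. Qed.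

Lemma sq_le_sqrt a b kk : 0 <= a -> 0 <= b -> 0 <= kk -> a ^ 2 <= kk * b ^ 2 -> a <= sqrt kk * b.
Proof.
move=> a0 b0 k0 h.
rewrite -(sqrt_pow2 a a0) -(sqrt_pow2 b b0) -sqrt_mult //; last by apply: pow_le.
by apply: sqrt_le_1_alt.
Qed.

Lemma cpx_ge0 (z : cpx) : (0 <= z)%R -> z = rC (cre z) /\ 0 <= cre z.
Proof.
rewrite leE phi_0 lecE /= => /andP [/eqP h /RleP h2]; split => //.
by case: z h h2 => a b /= ->.
Qed.

Definition opE m n (T : 'M[cpx]_(m, n)) :=
  fun c => 0 <= c /\ forall v : 'cV[cpx]_n, vnorm (T *m v)%R <= c * vnorm v.

Lemma opE_ne m n (T : 'M[cpx]_(m, n)) : exists c, opE T c.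
Proof.
have hh : Defs.hermitian (adj T *m T)%R by rewrite /Defs.hermitian adjM adjK.
have [K [K0 hK]] := herm_upper hh.
have [KE K0'] := cpx_ge0 K0.
exists (sqrt (cre K)); split; first exact: sqrt_pos.
move=> v; apply: sq_le_sqrt => //; try exact: vnorm_ge0.
by apply: QV_le_vnorm; rewrite -KE QV_QF.
Qed.

Lemma opnorm_spec m n (T : 'M[cpx]_(m, n)) : is_inf (opE T) (opnorm T).
Proof. by apply: Inf_spec; [exact: opE_ne | move=> x []]. Qed.

Lemma opnorm_ge0 m n (T : 'M[cpx]_(m, n)) : 0 <= opnorm T.
Proof. by apply: (le_inf (opnorm_spec T)) => x []. Qed.

Lemma opnorm_le m n (T : 'M[cpx]_(m, n)) c : 0 <= c ->
  (forall v, vnorm (T *m v)%R <= c * vnorm v) -> opnorm T <= c.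
Proof. by move=> c0 h; apply: (inf_le (opnorm_spec T)). Qed.

Lemma opnorm_bound m n (T : 'M[cpx]_(m, n)) v : vnorm (T *m v)%R <= opnorm T * vnorm v.
Proof.
have hv := vnorm_ge0 v; have hT := vnorm_ge0 (T *m v)%R.
case: (Req_dec (vnorm v) 0) => [h0|hn0].
  have [c [_ hc]] := opE_ne T; have := hc v; rewrite h0; nra.
apply: Rnot_lt_le => hlt.
have vp : 0 < vnorm v by lra.
set eps := (vnorm (T *m v)%R - opnorm T * vnorm v) / vnorm v.
have e0 : 0 < eps by rewrite /eps; apply: Rdiv_lt_0_compat; lra.
have [c [[_ hc] hlt2]] := inf_approx (opnorm_spec T) e0.
have := hc v.
have : c * vnorm v < (opnorm T + eps) * vnorm v by apply: Rmult_lt_compat_r.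
have -> : (opnorm T + eps) * vnorm v = vnorm (T *m v)%R.
  rewrite /eps /Rdiv Rmult_plus_distr_r Rmult_assoc Rinv_l // Rmult_1_r; lra.
lra.
Qed.

Lemma QV_opnorm m n (T : 'M[cpx]_(m, n)) w :
  (QV (T *m w) <= rC (opnorm T ^ 2) * QV w)%R.
Proof.
apply: vnorm_le_QV; have := opnorm_bound T w.
have := vnorm_ge0 (T *m w)%R; have := opnorm_ge0 T; have := vnorm_ge0 w.
move=> h1 h2 h3 h4; rewrite !pow2_mul.
have : vnorm (T *m w)%R * vnorm (T *m w)%R <= (opnorm T * vnorm w) * (opnorm T * vnorm w).
  by apply: Rmult_le_compat.
lra.
Qed.

Lemma opnorm_le1 m n (T : 'M[cpx]_(m, n)) :
  (forall w, QV (T *m w) <= QV w)%R -> opnorm T <= 1.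
Proof.
move=> h; apply: opnorm_le; first lra.
move=> v; rewrite -(sqrt_1); apply: sq_le_sqrt; try exact: vnorm_ge0; first lra.
by apply: QV_le_vnorm; rewrite rC1 mul1r.
Qed.

End RealPart.

Section ZLemmas.
Variable Z : lmodType cpx.

Lemma lmulZ_mul m n p q (S : 'M[cpx]_(m, n)) (S' : 'M[cpx]_(n, p)) (A : 'M[Z]_(p, q)) :
  lmulZ S (lmulZ S' A) = lmulZ (S *m S') A.
Proof.
apply/matrixP => i j; rewrite !mxE.
under eq_bigr => l _ do rewrite mxE scaler_sumr.
rewrite exchange_big /=; apply: eq_bigr => k _; rewrite mxE scaler_suml.
by apply: eq_bigr => l _; rewrite scalerA.
Qed.

Lemma rmulZ_mul m n p q (A : 'M[Z]_(m, n)) (S : 'M[cpx]_(n, p)) (S' : 'M[cpx]_(p, q)) :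
  rmulZ (rmulZ A S) S' = rmulZ A (S *m S').
Proof.
apply/matrixP => i j; rewrite !mxE.
under eq_bigr => l _ do rewrite mxE scaler_sumr.
rewrite exchange_big /=; apply: eq_bigr => k _; rewrite mxE scaler_suml.
by apply: eq_bigr => l _; rewrite scalerA mulrC.
Qed.

Lemma lrmulZ m n p q (S : 'M[cpx]_(m, n)) (A : 'M[Z]_(n, p)) (S' : 'M[cpx]_(p, q)) :
  lmulZ S (rmulZ A S') = rmulZ (lmulZ S A) S'.
Proof.
apply/matrixP => i j; rewrite !mxE.
under eq_bigr => l _ do rewrite mxE scaler_sumr.
under [RHS]eq_bigr => l _ do rewrite mxE scaler_sumr.
rewrite exchange_big /=; apply: eq_bigr => k _; apply: eq_bigr => l _.
by rewrite !scalerA mulrC.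
Qed.

Lemma lmulZ_scalar m n (c : cpx) (A : 'M[Z]_(m, n)) :
  lmulZ (c%:M) A = map_mx (fun z => c *: z) A.
Proof.
apply/matrixP => i j; rewrite !mxE (bigD1 i) //= big1 ?addr0.
  by rewrite mxE eqxx mulr1n.
by move=> l /negPf hl; rewrite mxE eq_sym hl mulr0n scale0r.
Qed.

Lemma rmulZ_scalar m n (c : cpx) (A : 'M[Z]_(m, n)) :
  rmulZ A (c%:M) = map_mx (fun z => c *: z) A.
Proof.
apply/matrixP => i j; rewrite !mxE (bigD1 j) //= big1 ?addr0.
  by rewrite mxE eqxx mulr1n.
by move=> l /negPf hl; rewrite mxE hl mulr0n scale0r.
Qed.

Lemma map_scale1 m n (A : 'M[Z]_(m, n)) : map_mx (fun z => 1 *: z) A = A.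
Proof. by apply/matrixP => i j; rewrite mxE scale1r. Qed.

Lemma congZ_mul n k p (B : 'M[cpx]_(n, k)) (C : 'M[cpx]_(k, p)) (A : 'M[Z]_n) :
  congZ (B *m C) A = congZ C (congZ B A).
Proof.
by rewrite /congZ adjM -lmulZ_mul -rmulZ_mul lrmulZ.
Qed.

Lemma congZ1 n (A : 'M[Z]_n) : congZ 1%:M A = A.
Proof. by rewrite /congZ adj1 lmulZ_scalar rmulZ_scalar !map_scale1. Qed.

Lemma congZ_rC n (r : R) (A : 'M[Z]_n) : congZ ((rC r)%:M) A = smulZ (r * r) A.
Proof.
rewrite /congZ adj_scalar rC_conj lmulZ_scalar rmulZ_scalar.
by apply/matrixP => i j; rewrite !mxE scalerA rC_mul.
Qed.

Lemma smulZE n r (A : 'M[Z]_n) : smulZ r A = lmulZ ((rC r)%:M) A.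
Proof. by rewrite lmulZ_scalar. Qed.

Lemma congZ_smul n k (S : 'M[cpx]_(n, k)) r (A : 'M[Z]_n) :
  congZ S (smulZ r A) = smulZ r (congZ S A).
Proof.
rewrite /congZ !smulZE -lrmulZ !lmulZ_mul; congr lmulZ.
by rewrite scalar_mxC.
Qed.

Lemma sum0Z k (f : 'I_k -> Z) : \sum_(l < k) (0 : cpx) *: f l = 0.
Proof. by rewrite big1 // => l _; rewrite scale0r. Qed.
Lemma sumZ0 k (f : 'I_k -> cpx) : \sum_(l < k) f l *: (0 : Z) = 0.
Proof. by rewrite big1 // => l _; rewrite scaler0. Qed.

Lemma lmulZ_block m1 m2 n1 n2 p1 p2 (S1 : 'M[cpx]_(m1, n1)) (S2 : 'M[cpx]_(m2, n2))
  (A : 'M[Z]_(n1, p1)) (B : 'M[Z]_(n2, p2)) :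
  lmulZ (block_mx S1 0 0 S2) (block_mx A 0 0 B) = block_mx (lmulZ S1 A) 0 0 (lmulZ S2 B).
Proof.
apply/matrixP => i j; rewrite [LHS]mxE big_split_ord /=.
rewrite -(splitK i) -(splitK j); case: (split i) => i'; case: (split j) => j' /=;
under eq_bigr => l _ do rewrite ?(block_mxEul, block_mxEur, block_mxEdl, block_mxEdr) ?mxE;
under [X in _ + X]eq_bigr => l _ do rewrite ?(block_mxEul, block_mxEur, block_mxEdl, block_mxEdr) ?mxE;
by rewrite ?(block_mxEul, block_mxEur, block_mxEdl, block_mxEdr) !mxE
  ?sum0Z ?sumZ0 ?addr0 ?add0r.
Qed.

Lemma rmulZ_block m1 m2 n1 n2 p1 p2 (S1 : 'M[cpx]_(n1, p1)) (S2 : 'M[cpx]_(n2, p2))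
  (A : 'M[Z]_(m1, n1)) (B : 'M[Z]_(m2, n2)) :
  rmulZ (block_mx A 0 0 B) (block_mx S1 0 0 S2) = block_mx (rmulZ A S1) 0 0 (rmulZ B S2).
Proof.
apply/matrixP => i j; rewrite [LHS]mxE big_split_ord /=.
rewrite -(splitK i) -(splitK j); case: (split i) => i'; case: (split j) => j' /=;
under eq_bigr => l _ do rewrite ?(block_mxEul, block_mxEur, block_mxEdl, block_mxEdr) ?mxE;
under [X in _ + X]eq_bigr => l _ do rewrite ?(block_mxEul, block_mxEur, block_mxEdl, block_mxEdr) ?mxE;
by rewrite ?(block_mxEul, block_mxEur, block_mxEdl, block_mxEdr) !mxE
  ?sum0Z ?sumZ0 ?addr0 ?add0r.
Qed.

Lemma congZ_block n k p q (S1 : 'M[cpx]_(n, p)) (S2 : 'M[cpx]_(k, q))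
  (A : 'M[Z]_n) (B : 'M[Z]_k) :
  congZ (block_mx S1 0 0 S2) (dsumZ A B) = dsumZ (congZ S1 A) (congZ S2 B).
Proof. by rewrite /congZ /dsumZ adj_block !adj0 rmulZ_block lmulZ_block. Qed.
End ZLemmas.

Lemma inv_uniq n (A B : 'M[cpx]_n) : A *m B = 1%:M -> invmx A = B.
Proof. by move=> h; have [uA _] := mulmx1_unit h; rewrite -(mulKmx uA B) h mulmx1. Qed.

Lemma invmxSS n (S : 'M[cpx]_n) : S \in unitmx -> invmx (S *m S) = invmx S *m invmx S.
Proof.
by move=> uS; apply: inv_uniq; rewrite mulmxA -[S *m S *m invmx S]mulmxA mulmxV // mulmx1 mulmxV.
Qed.

Lemma pos_unit n (M : 'M[cpx]_n) : mx_pos M -> M \in unitmx.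
Proof.
move=> /mx_posE hp; rewrite -row_free_unit -kermx_eq0; apply/negPn/negP => h.
have : eigenvalue M 0.
  rewrite /eigenvalue /eigenspace; have -> : M - 0%:M = M by apply/matrixP=> i j; rewrite !mxE mul0rn subr0.
  exact: h.
by move/hp; rewrite ltxx.
Qed.


Lemma ReM_herm n (X : 'M[cpx]_n) : Defs.hermitian (Defs.ReM X).
Proof. by rewrite /Defs.hermitian /Defs.ReM adjZ rC_conj adjD adjK addrC. Qed.
Lemma Xt_herm n t (X : 'M[cpx]_n) : Defs.hermitian (Xt t X).
Proof. by rewrite /Defs.hermitian /Xt adjB adj_scalar rC_conj ReM_herm. Qed.
Lemma QF_Xt n t (X : 'M[cpx]_n) w : QF (Xt t X) w = rC t * QV w - QF (Defs.ReM X) w.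
Proof. by rewrite /Xt QFB QF_scalar. Qed.
Lemma ReM_cong n k (T : 'M[cpx]_(n, k)) X : Defs.ReM (adj T *m X *m T) = adj T *m Defs.ReM X *m T.
Proof.
rewrite /Defs.ReM !adjM adjK -scalemxAr -scalemxAl.
by rewrite mulmxDr mulmxDl !mulmxA.
Qed.
Lemma QF_scale k (M : 'M[cpx]_k) r w : QF M (rC r *: w) = rC (r * r) * QF M w.
Proof. by rewrite /QF adjZ rC_conj -scalemxAr -!scalemxAl scalerA !mxE rC_mul. Qed.

Lemma ReM_block n k (X : 'M[cpx]_n) (Y : 'M[cpx]_k) :
  Defs.ReM (block_mx X 0 0 Y) = block_mx (Defs.ReM X) 0 0 (Defs.ReM Y).
Proof. by rewrite /Defs.ReM adj_block !adj0 add_block_mx scale_block_mx !addr0 !scaler0. Qed.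
Lemma Xt_block n k t (X : 'M[cpx]_n) (Y : 'M[cpx]_k) :
  Xt t (block_mx X 0 0 Y) = block_mx (Xt t X) 0 0 (Xt t Y).
Proof.
by rewrite /Xt ReM_block (scalar_mx_block n k) opp_block_mx add_block_mx !oppr0 !addr0.
Qed.
Lemma herm_block n k (M : 'M[cpx]_n) (N : 'M[cpx]_k) :
  Defs.hermitian M -> Defs.hermitian N -> Defs.hermitian (block_mx M 0 0 N).
Proof. by move=> hM hN; rewrite /Defs.hermitian adj_block !adj0 hM hN. Qed.

Lemma pos_block n k (M : 'M[cpx]_n) (N : 'M[cpx]_k) :
  mx_pos (block_mx M 0 0 N) <-> mx_pos M /\ mx_pos N.
Proof.
rewrite !mx_posE; split.
  move=> h; split => a /eigenvalueP [v hv v0]; apply: h; apply/eigenvalueP.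
    exists (row_mx v 0); last by rewrite row_mx_eq0 negb_and v0.
    by rewrite mul_row_block !mul0mx !mulmx0 !addr0 hv scale_row_mx scaler0.
  exists (row_mx 0 v); last by rewrite row_mx_eq0 negb_and v0 orbT.
  by rewrite mul_row_block !mul0mx !mulmx0 !add0r hv scale_row_mx scaler0.
case=> h1 h2 a /eigenvalueP [u hu u0].
move: hu u0; rewrite -(hsubmxK u) mul_row_block !mulmx0 addr0 add0r scale_row_mx.
move=> /eq_row_mx [e1 e2]; rewrite row_mx_eq0 negb_and => /orP [n1|n2].
  by apply: h1; apply/eigenvalueP; exists (lsubmx u).
by apply: h2; apply/eigenvalueP; exists (rsubmx u).
Qed.
Section RealPart2.
Local Open Scope R_scope.

Lemma inf_max (E E1 E2 : R -> Prop) m m1 m2 :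
  is_inf E m -> is_inf E1 m1 -> is_inf E2 m2 -> (forall t, E t <-> E1 t /\ E2 t) ->
  (forall t t', E1 t -> t <= t' -> E1 t') -> (forall t t', E2 t -> t <= t' -> E2 t') ->
  m = Rmax m1 m2.
Proof.
move=> hm hm1 hm2 hE up1 up2.
have l1 : m1 <= m by apply: (le_inf hm) => x /hE [h _]; exact: inf_le hm1 h.
have l2 : m2 <= m by apply: (le_inf hm) => x /hE [_ h]; exact: inf_le hm2 h.
have l : Rmax m1 m2 <= m by apply: Rmax_lub.
apply: Rle_antisym => //; apply: Rnot_lt_le => hlt.
have e0 : 0 < m - Rmax m1 m2 by lra.
have [t1 [E1t1 ht1]] := inf_approx hm1 e0.
have [t2 [E2t2 ht2]] := inf_approx hm2 e0.
have Et : E (Rmax t1 t2).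
  apply/hE; split; [apply: up1 E1t1 _ | apply: up2 E2t2 _]; [exact: Rmax_l | exact: Rmax_r].
have := inf_le hm Et.
have := Rmax_l m1 m2; have := Rmax_r m1 m2 => ? ?.
have : Rmax t1 t2 < m by apply: Rmax_lub_lt; lra.
lra.
Qed.

Lemma inf_cong (F G : R -> Prop) uF uG o :
  is_inf F uF -> is_inf G uG -> 0 <= o -> (exists t, F t) ->
  (forall t s, F t -> o * t < s -> G s) -> uG <= o * uF.
Proof.
move=> hF hG o0 [t0 Ft0] hFG.
have step : forall t, F t -> uG <= o * t.
  move=> t Ft; apply: Rnot_lt_le => hlt.
  have Gs : G ((uG + o * t) / 2) by apply: (hFG t); [exact: Ft | lra].
  have := inf_le hG Gs; lra.
case: (Req_dec o 0) => [ho|on0].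
  have := step _ Ft0; rewrite ho; lra.
have op : 0 < o by lra.
suff : uG / o <= uF.
  move=> h; have := Rmult_le_compat_l o _ _ o0 h.
  by rewrite /Rdiv -Rmult_assoc (Rmult_comm o uG) Rmult_assoc Rinv_r // Rmult_1_r.
apply: (le_inf hF) => t Ft; have := step _ Ft => h.
rewrite /Rdiv; apply: (Rmult_le_reg_l o) => //.
by rewrite -Rmult_assoc (Rmult_comm o uG) Rmult_assoc Rinv_r // Rmult_1_r.
Qed.
End RealPart2.

Section Main.
Variable Z : lmodType cpx.
Variable nu : forall n, 'M[Z]_n -> R.
Hypothesis Hg : matrix_gauge nu.

Lemma nu_ge0 n (A : 'M[Z]_n) : Rle 0 (nu A).
Proof. by case: Hg => h _; apply: h. Qed.
Lemma nu_smul n t (A : 'M[Z]_n) : Rle 0 t -> nu (smulZ t A) = Rmult t (nu A).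
Proof. by case: Hg => _ [_ [h _]]; apply: h. Qed.
Lemma nu_cong n k (X : 'M[cpx]_(n, k)) (A : 'M[Z]_n) :
  Rle (nu (congZ X A)) (Rmult (opnorm X ^ 2) (nu A)).
Proof. by case: Hg => _ [_ [_ [h _]]]; apply: h. Qed.
Lemma nu_dsum n m (A : 'M[Z]_n) (B : 'M[Z]_m) :
  nu (dsumZ A B) = Rmax (nu A) (nu B).
Proof. by case: Hg => _ [_ [_ [_ h]]]; apply: h. Qed.

Lemma cmp n k (M S : 'M[cpx]_n) (M' S' : 'M[cpx]_k) (T : 'M[cpx]_(n, k)) (A : 'M[Z]_n) :
  Defs.hermitian S -> S *m S = invmx M -> M \in unitmx ->
  Defs.hermitian S' -> S' *m S' = invmx M' -> M' \in unitmx ->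
  (forall w, QF M (T *m w) <= QF M' w) ->
  Rle (nu (congZ S' (congZ T A))) (nu (congZ S A)).
Proof.
move=> hS SS uM hS' SS' uM' hle.
have uS : S \in unitmx by move: (unitmx_inv M); rewrite -SS unitmx_mul uM => /andP [].
have uS' : S' \in unitmx by move: (unitmx_inv M'); rewrite -SS' unitmx_mul uM' => /andP [].
pose W := invmx S *m T *m S'.
have hW : congZ S' (congZ T A) = congZ W (congZ S A).
  by rewrite -!congZ_mul /W !mulmxA mulmxV // mul1mx.
have eM : invmx S *m invmx S = M by rewrite -invmxSS // SS invmxK.
have eM' : S' *m M' *m S' = 1%:M.
  by rewrite -[M']invmxK -SS' invmxSS // mulmxA mulmxKV // mulmxV.
have opW : Rle (opnorm W) 1.
  apply: opnorm_le1 => w.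
  rewrite QV_QF /W !adjM adj_invmx hS hS'.
  have -> : S' *m (adj T *m invmx S) *m (invmx S *m T *m S') = adj (T *m S') *m M *m (T *m S').
    by rewrite adjM hS' -eM !mulmxA.
  rewrite QF_cong -mulmxA (le_trans (hle _)) //.
  by rewrite -QF_cong hS' eM' QF1.
rewrite hW; apply: Rle_trans (nu_cong _ _) _.
have h0 := opnorm_ge0 W; have h1 := nu_ge0 (congZ S A).
have : Rle (opnorm W ^ 2) 1 by rewrite pow2_mul; nra.
nra.
Qed.

Lemma rC_ge0 x : (0 <= rC x) <-> Rle 0 x.
Proof. by rewrite -rC0 rC_le; split => /RleP. Qed.
Lemma rC_gt0 x : (0 < rC x) <-> Rlt 0 x.
Proof. by rewrite -rC0 rC_lt; split => /RltP. Qed.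

Lemma cmp_pos n k (M : 'M[cpx]_n) (M' : 'M[cpx]_k) (T : 'M[cpx]_(n, k)) (A : 'M[Z]_n) :
  Defs.hermitian M -> mx_pos M -> Defs.hermitian M' -> mx_pos M' ->
  (forall w, QF M (T *m w) <= QF M' w) ->
  Rle (nu (congZ (invsqrt M') (congZ T A))) (nu (congZ (invsqrt M) A)).
Proof.
move=> hM pM hM' pM' hle.
have [h1 [_ h3]] := invsqrt_spec hM pM.
have [h1' [_ h3']] := invsqrt_spec hM' pM'.
exact: cmp h1 h3 (pos_unit pM) h1' h3' (pos_unit pM') hle.
Qed.

Lemma congZ_herm n (S : 'M[cpx]_n) (A : 'M[Z]_n) :
  Defs.hermitian S -> lmulZ S (rmulZ A S) = congZ S A.
Proof. by rewrite /congZ => ->. Qed.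

Lemma ufeasE n (A : 'M[Z]_n) X t : ufeas nu A X t <->
  Rlt 0 t /\ mx_pos (Xt t X) /\ Rle (nu (congZ (invsqrt (Xt t X)) A)) 1.
Proof.
rewrite /ufeas; split => -[t0 [p h]]; do !split => //;
  have [hs _] := invsqrt_spec (Xt_herm t X) p; by rewrite ?congZ_herm // -congZ_herm.
Qed.

Lemma pos_up n t t' (X : 'M[cpx]_n) : mx_pos (Xt t X) -> Rle t t' -> mx_pos (Xt t' X).
Proof.
move=> p htt; have [c [c0 hc]] := pos_lower (Xt_herm t X) p.
apply: (lower_pos (Xt_herm t' X) c0) => w.
have -> : QF (Xt t' X) w = QF (Xt t X) w + rC (t' - t) * QV w.
  by rewrite !QF_Xt /Rminus rC_add rC_opp; ring.
apply: le_trans (hc w) _; rewrite lerDl mulr_ge0 ?QV_ge0 //.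
by apply/rC_ge0; lra.
Qed.

Lemma feas_up n (A : 'M[Z]_n) X t t' : ufeas nu A X t -> Rle t t' -> ufeas nu A X t'.
Proof.
move=> /ufeasE [t0 [p h]] htt; apply/ufeasE.
have p' := pos_up p htt.
split; first lra; split => //.
apply: Rle_trans h; rewrite -[A in congZ _ A](congZ1 A).
apply: cmp_pos; [exact: Xt_herm | exact: p | exact: Xt_herm | exact: p' | move=> w].
rewrite mul1mx !QF_Xt lerD2r; apply: ler_wpM2r; first exact: QV_ge0.
by rewrite rC_le; apply/RleP.
Qed.

Ltac toR := rewrite -?RplusE -?RmultE -?RminusE -?RoppE in *.

Lemma herm_bounds k (H : 'M[cpx]_k) : Defs.hermitian H ->
  exists c, Rle 0 c /\ forall w, - rC c * QV w <= QF H w /\ QF H w <= rC c * QV w.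
Proof.
move=> hH; have [K1 [K10 h1]] := herm_upper hH.
have hN : Defs.hermitian (- H) by rewrite /Defs.hermitian adjN hH.
have [K2 [K20 h2]] := herm_upper hN.
have [E1 k1] := cpx_ge0 K10; have [E2 k2] := cpx_ge0 K20.
exists (Rplus (cre K1) (cre K2)); split; first lra.
move=> w; have q0 := QV_ge0 w.
have k10 : 0 <= rC (cre K1) by apply/rC_ge0.
have k20 : 0 <= rC (cre K2) by apply/rC_ge0.
split.
  have := h2 w; rewrite QFN E2 lerNl => h; apply: le_trans h.
  by rewrite rC_add mulNr lerN2 mulrDl lerDr mulr_ge0.
apply: le_trans (h1 w) _; rewrite E1 rC_add mulrDl lerDl mulr_ge0 //.
Qed.

Lemma feas_ex n (A : 'M[Z]_n) X : exists t, ufeas nu A X t.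
Proof.
have [k [k0 hk]] := herm_bounds (ReM_herm X).
set t0 := Rplus k 1.
have p0 : mx_pos (Xt t0 X).
  apply: (lower_pos (Xt_herm t0 X) ltr01) => w; rewrite QF_Xt mul1r.
  have [_ h] := hk w; rewrite /t0 rC_add rC1 mulrDl mul1r.
  by rewrite addrAC lerDr subr_ge0.
set g0 := nu (congZ (invsqrt (Xt t0 X)) A).
have g00 : Rle 0 g0 := nu_ge0 _.
set a := Rplus (Rmult 2 k) 1.
set t := Rplus k (Rmult a (Rplus g0 1)).
have htt : Rle t0 t by rewrite /t0 /t /a; nra.
have p := pos_up p0 htt.
set r := sqrt (Rplus g0 1).
have rr : Rmult r r = Rplus g0 1 by rewrite /r sqrt_sqrt //; lra.
have hc := cmp_pos (T := (rC r)%:M) A (Xt_herm t0 X) p0 (Xt_herm t X) p.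
have hle : forall w, QF (Xt t0 X) ((rC r)%:M *m w) <= QF (Xt t X) w.
  move=> w; rewrite mul_scalar_mx QF_scale.
  have -> : rC (r * r) = rC (Rplus g0 1) by rewrite -rr.
  have [h1 h2] := hk w; have q0 := QV_ge0 w.
  have ea : a = Rplus t0 k by rewrite /a /t0; lra.
  have et : t = Rplus (Rmult a (Rplus g0 1)) k by rewrite /t Rplus_comm.
  have u : QF (Xt t0 X) w <= rC a * QV w.
    by rewrite QF_Xt ea rC_Rplus mulrDl lerD2l lerNl -mulNr.
  apply: le_trans (ler_wpM2l _ u) _; first by apply/rC_ge0; lra.
  set c1 := rC (Rplus g0 1).
  rewrite QF_Xt et rC_Rplus rC_Rmult -/c1 mulrDl -addrA mulrA [c1 * rC a]mulrC lerDl.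
  by rewrite subr_ge0.
have := hc hle; rewrite congZ_rC congZ_smul nu_smul; last by rewrite rr; lra.
rewrite rr -/g0 => hN.
exists t; apply/ufeasE; split; first by rewrite /t /a; nra.
split => //; nra.
Qed.

Lemma unorm_spec n (A : 'M[Z]_n) X : is_inf (ufeas nu A X) (unorm nu A X).
Proof.
apply: Inf_spec; first exact: feas_ex.
by move=> t /ufeasE [h _]; apply: Rlt_le.
Qed.

Lemma nu_dsum_sqrt n k (MX : 'M[cpx]_n) (MY : 'M[cpx]_k) (A : 'M[Z]_n) (B : 'M[Z]_k) :
  Defs.hermitian MX -> mx_pos MX -> Defs.hermitian MY -> mx_pos MY ->
  nu (congZ (invsqrt (block_mx MX 0 0 MY)) (dsumZ A B)) =
  Rmax (nu (congZ (invsqrt MX) A)) (nu (congZ (invsqrt MY) B)).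
Proof.
move=> hX pX hY pY.
have hb := herm_block hX hY.
have pb : mx_pos (block_mx MX 0 0 MY) by apply/pos_block.
have ub := pos_unit pb.
have [sX [_ ssX]] := invsqrt_spec hX pX.
have [sY [_ ssY]] := invsqrt_spec hY pY.
have [sb [_ ssb]] := invsqrt_spec hb pb.
set Sb := block_mx (invsqrt MX) 0 0 (invsqrt MY).
have hSb : Defs.hermitian Sb by apply: herm_block.
have ssSb : Sb *m Sb = invmx (block_mx MX 0 0 MY).
  rewrite invmx_block_diag // /Sb mulmx_block ssX ssY !mulmx0 !mul0mx !addr0 !add0r.
  by [].
have hle : forall w, QF (block_mx MX 0 0 MY) (1%:M *m w) <= QF (block_mx MX 0 0 MY) w.
  by move=> w; rewrite mul1mx.
have c1 := cmp (dsumZ A B) sb ssb ub hSb ssSb ub hle.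
have c2 := cmp (dsumZ A B) hSb ssSb ub sb ssb ub hle.
rewrite !congZ1 in c1 c2.
rewrite -nu_dsum -congZ_block; exact: Rle_antisym.
Qed.

Lemma feas_dsum n k (A : 'M[Z]_n) X (B : 'M[Z]_k) Y t :
  ufeas nu (dsumZ A B) (block_mx X 0 0 Y) t <-> ufeas nu A X t /\ ufeas nu B Y t.
Proof.
rewrite !ufeasE Xt_block pos_block; split.
  case=> t0 [[pX pY] h].
  move: h; rewrite nu_dsum_sqrt //; try exact: Xt_herm.
  move=> h; have := Rmax_l (nu (congZ (invsqrt (Xt t X)) A)) (nu (congZ (invsqrt (Xt t Y)) B)).
  have := Rmax_r (nu (congZ (invsqrt (Xt t X)) A)) (nu (congZ (invsqrt (Xt t Y)) B)).
  move=> ? ?; split; do !split => //; lra.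
case=> [[t0 [pX hX]] [_ [pY hY]]]; do !split => //.
rewrite nu_dsum_sqrt //; try exact: Xt_herm.
exact: Rmax_lub.
Qed.

Lemma feas_cong n k (A : 'M[Z]_n) X (T : 'M[cpx]_(n, k)) t s :
  ufeas nu A X t -> Rlt (Rmult (opnorm T ^ 2) t) s ->
  ufeas nu (congZ T A) (adj T *m X *m T) s.
Proof.
move=> /ufeasE [t0 [p h]] hs.
have o0 : Rle 0 (opnorm T ^ 2) by apply: pow2_ge_0.
have s0 : Rlt 0 s by nra.
set Y := Xt s (adj T *m X *m T).
set c := rC (Rminus s (Rmult (opnorm T ^ 2) t)).
have c0 : 0 < c by apply/rC_gt0; lra.
have key : forall w, QF (Xt t X) (T *m w) + c * QV w <= QF Y w.
  move=> w; rewrite /Y !QF_Xt ReM_cong QF_cong addrAC lerD2r.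
  have e : rC s = rC (Rmult (opnorm T ^ 2) t) + c by rewrite /c -rC_add; congr rC; rewrite /GRing.add /=; lra.
  rewrite e mulrDl lerD2r rC_Rmult [rC (opnorm T ^ 2) * _]mulrC -mulrA.
  apply: ler_wpM2l; first by apply/rC_ge0; lra.
  exact: QV_opnorm.
have [c' [c'0 hc']] := pos_lower (Xt_herm t X) p.
have pY : mx_pos Y.
  apply: (lower_pos (Xt_herm s _) c0) => w; apply: le_trans (key w).
  rewrite lerDr; apply: le_trans (hc' _); by rewrite mulr_ge0 ?QV_ge0 ?ltW.
apply/ufeasE; split => //; split => //.
apply: Rle_trans h; apply: cmp_pos => //; try exact: Xt_herm.
move=> w; apply: le_trans (key w); rewrite lerDl mulr_ge0 ?QV_ge0 ?ltW //.
Qed.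

End Main.

Lemma lemma4p4_aux (Z : lmodType cpx) (nu : forall n, 'M[Z]_n -> R)
  (Hgauge : matrix_gauge nu) (Hproper : C_proper nu) :
  (forall n (A : 'M[Z]_n) (X : 'M[cpx]_n),
     (exists t, ufeas nu A X t) /\
     is_inf (ufeas nu A X) (unorm nu A X) /\ Rle 0 (unorm nu A X)) /\
  (forall n k (A : 'M[Z]_n) (X : 'M[cpx]_n) (B : 'M[Z]_k) (Y : 'M[cpx]_k),
     unorm nu (dsumZ A B) (block_mx X 0%R 0%R Y) = Rmax (unorm nu A X) (unorm nu B Y)) /\
  (forall n k (A : 'M[Z]_n) (X : 'M[cpx]_n) (T : 'M[cpx]_(n, k)),
     Rle (unorm nu (congZ T A) (adj T *m X *m T)%R) (Rmult (opnorm T ^ 2) (unorm nu A X))).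
Proof.
split; [|split].
- move=> n A X; split; first exact: feas_ex.
  split; first exact: unorm_spec.
  have [t ht] := feas_ex Hgauge A X.
  apply: (le_inf (unorm_spec Hgauge A X)) => x /ufeasE [h _]; exact: Rlt_le.
- move=> n k A X B Y.
  apply: (inf_max (unorm_spec Hgauge _ _) (unorm_spec Hgauge A X) (unorm_spec Hgauge B Y)).
  + by move=> t; apply: feas_dsum.
  + by move=> t t'; apply: feas_up.
  + by move=> t t'; apply: feas_up.
- move=> n k A X T.
  apply: (inf_cong (unorm_spec Hgauge A X) (unorm_spec Hgauge _ _)).
  + exact: pow2_ge_0.
  + exact: feas_ex.
  + move=> t s ht hs; exact: (feas_cong Hgauge ht hs).
Qed.

Local Open Scope R_scope.

Theorem lemma4p4 (Z : lmodType cpx) (nu : forall n, 'M[Z]_n -> R)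
  (Hgauge : matrix_gauge nu) (Hproper : C_proper nu) :
  (* well-definedness: nonempty defining set, infimum attained as a value in [0,oo) *)
  (forall n (A : 'M[Z]_n) (X : 'M[cpx]_n),
     (exists t, ufeas nu A X t) /\
     is_inf (ufeas nu A X) (unorm nu A X) /\ 0 <= unorm nu A X) /\
  (* direct sums *)
  (forall n k (A : 'M[Z]_n) (X : 'M[cpx]_n) (B : 'M[Z]_k) (Y : 'M[cpx]_k),
     unorm nu (dsumZ A B) (block_mx X 0%R 0%R Y) = Rmax (unorm nu A X) (unorm nu B Y)) /\
  (* congruence by a scalar matrix T *)
  (forall n k (A : 'M[Z]_n) (X : 'M[cpx]_n) (T : 'M[cpx]_(n, k)),
     unorm nu (congZ T A) (adj T *m X *m T)%R <= opnorm T ^ 2 * unorm nu A X).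
Proof. exact: lemma4p4_aux. Qed.
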